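(* Let $X$ be a non-empty set, $(Y,\langle\cdot,\cdot\rangle)$ a real inner product space, and let $I:X\to\mathbb{R}$, $\Phi:X\to Y$ and $\mu>0$ be such that the function $x\mapsto I(x)+\mu\|\Phi(x)\|^2$ has a global minimum in $X$. Then at least one of the following assertions holds: (a) for each filtering cover $\mathcal{N}$ of $X$ there exists $A\in\mathcal{N}$ such that $$\sup_{\lambda\in Y}\inf_{x\in A}\big(I(x)+\mu(2\langle\Phi(x),\lambda\rangle-\|\lambda\|^2)\big)<\inf_{x\in A}\sup_{\lambda\in\Phi(A)}\big(I(x)+\mu(2\langle\Phi(x),\lambda\rangle-\|\lambda\|^2)\big);$$ (b) for each global minimum $u$ of $x\mapsto I(x)+\mu\|\Phi(x)\|^2$ one has $$I(u)\leq I(x)+2\mu\big(\langle\Phi(x),\Phi(u)\rangle-\|\Phi(u)\|^2\big)$$ for all $x\in X$.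
   Context: A family $\mathcal{N}$ of non-empty subsets of $X$ is a filtering cover of $X$ if $\bigcup_{A\in\mathcal{N}}A=X$ and for each $A_1,A_2\in\mathcal{N}$ there is $A_3\in\mathcal{N}$ with $A_1\cup A_2\subseteq A_3$. *)

(* Defs.v *)
From HB Require Import structures.
From mathcomp Require Import all_boot all_order all_algebra.
From mathcomp Require Import all_classical all_reals ereal.
Set Implicit Arguments. Unset Strict Implicit. Unset Printing Implicit Defensive.
Import Order.TTheory GRing.Theory Num.Theory.
Local Open Scope classical_set_scope.
Local Open Scope ring_scope.

Definition is_inner_product (R : realType) (Y : lmodType R)
    (ip : Y -> Y -> R) : Prop :=
  [/\ (forall x y, ip x y = ip y x),
      (forall a x y z, ip (a *: x + y) z = a * ip x z + ip y z),
      (forall x, 0 <= ip x x) &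
      (forall x, ip x x = 0 -> x = 0)].

Definition ipnorm (R : realType) (Y : lmodType R) (ip : Y -> Y -> R) (y : Y) : R :=
  Num.sqrt (ip y y).

Definition filtering_cover (X : Type) (N : set (set X)) : Prop :=
  [/\ (forall A, N A -> A !=set0),
      \bigcup_(A in N) A = setT &
      (forall A1 A2, N A1 -> N A2 -> exists2 A3, N A3 & A1 `|` A2 `<=` A3)].

Definition is_global_min (X : Type) (R : realType) (J : X -> R) (u : X) : Prop :=
  forall x, J u <= J x.

(* Main.v *)
Require Import Defs.
From HB Require Import structures.
From mathcomp Require Import all_boot all_order all_algebra.
From mathcomp Require Import all_classical all_reals ereal.
From mathcomp Require Import ring lra.
Import Order.TTheory GRing.Theory Num.Theory.
Local Open Scope classical_set_scope.
Local Open Scope ring_scope.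

Section IP.
Variables (R : realType) (Y : lmodType R) (ip : Y -> Y -> R).
Hypothesis H : is_inner_product ip.

Lemma ipDl x y z : ip (x + y) z = ip x z + ip y z.
Proof. case: H => _ h _ _; by rewrite -[x in LHS]scale1r h mul1r. Qed.
Lemma ip0l z : ip 0 z = 0.
Proof. have := ipDl 0 0 z; rewrite addr0 => h. lra. Qed.
Lemma ipZl a x z : ip (a *: x) z = a * ip x z.
Proof. case: H => _ h _ _; by rewrite -[a *: x]addr0 h ip0l addr0. Qed.
Lemma ipNl x z : ip (- x) z = - ip x z.
Proof. by rewrite -scaleN1r ipZl mulN1r. Qed.
Lemma ipBl x y z : ip (x - y) z = ip x z - ip y z.
Proof. by rewrite ipDl ipNl. Qed.
Lemma ipS x y : ip x y = ip y x.
Proof. by case: H. Qed.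
Lemma ipDr x y z : ip z (x + y) = ip z x + ip z y.
Proof. by rewrite ipS ipDl !(ipS z). Qed.
Lemma ipZr a x z : ip z (a *: x) = a * ip z x.
Proof. by rewrite ipS ipZl ipS. Qed.
Lemma ipBr x y z : ip z (x - y) = ip z x - ip z y.
Proof. by rewrite ipS ipBl !(ipS z). Qed.
Lemma ipge0 x : 0 <= ip x x.
Proof. by case: H. Qed.
Lemma ipnorm2 y : ipnorm ip y ^+ 2 = ip y y.
Proof. by rewrite /ipnorm sqr_sqrtr // ipge0. Qed.
End IP.

Lemma step (R : realType) (mu V D E0 T s : R) : 0 < mu -> 0 < s -> 0 <= D ->
  mu * D < s ^+ 2 -> T < mu * (2 * E0 - D) + s ^+ 2 ->
  2 * s * E0 <= s ^+ 2 * V + D -> T < mu * s * V + s + s ^+ 2.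
Proof.
move=> mu0 s0 D0 h1 h2 h3.
have h4 : s * (mu * (2 * E0 - D)) <= s * (mu * s * V + s).
  have -> : s * (mu * (2 * E0 - D)) = mu * (2 * s * E0) - s * (mu * D) by ring.
  have : mu * (2 * s * E0) <= mu * (s ^+ 2 * V + D) by rewrite ler_pM2l.
  have : 0 <= s * (mu * D) by apply: mulr_ge0; [exact: ltW| apply: mulr_ge0 => //; exact: ltW].
  nra.
have h5 : mu * (2 * E0 - D) <= mu * s * V + s by rewrite -(ler_pM2l s0).
lra.
Qed.

Lemma final (R : realType) (mu V T : R) : 0 < mu -> 0 <= V ->
  (forall s, 0 < s -> s <= 1 -> T < mu * s * V + s + s ^+ 2) -> T <= 0.
Proof.
move=> mu0 V0 h; apply/ler_addgt0Pr => e e0; rewrite add0r.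
set K := mu * V + 2.
have K0 : 0 < K by rewrite /K; have := mulr_ge0 (ltW mu0) V0; lra.
set s := e / (K + e).
have Ke : 0 < K + e by lra.
have s0 : 0 < s by rewrite divr_gt0.
have s1 : s <= 1 by rewrite ler_pdivrMr // mul1r; lra.
have sK : s * K <= e.
  rewrite /s mulrAC ler_pdivrMr // ler_pM2l //; lra.
have := h s s0 s1.
have : s ^+ 2 <= s by rewrite expr2 ger_pMr.
have : mu * s * V = s * (mu * V) by ring.
rewrite /K in sK. nra.
Qed.

Theorem theorem3p4 (R : realType) (X : Type) (Y : lmodType R)
  (ip : Y -> Y -> R) (I : X -> R) (Phi : X -> Y) (mu : R) :
  inhabited X ->
  is_inner_product ip ->
  0 < mu ->
  (exists u, is_global_min (fun x => I x + mu * ipnorm ip (Phi x) ^+ 2) u) ->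
  (forall N : set (set X), filtering_cover N ->
     exists2 A, N A &
       (ereal_sup [set ereal_inf
            [set (I x + mu * (2 * ip (Phi x) l - ipnorm ip l ^+ 2))%:E | x in A]
          | l in [set: Y]]
        < ereal_inf [set ereal_sup
            [set (I x + mu * (2 * ip (Phi x) l - ipnorm ip l ^+ 2))%:E | l in Phi @` A]
          | x in A])%E)
  \/
  (forall u, is_global_min (fun x => I x + mu * ipnorm ip (Phi x) ^+ 2) u ->
     forall x, I u <= I x + 2 * mu * (ip (Phi x) (Phi u) - ipnorm ip (Phi u) ^+ 2)).
Proof.
move=> _ H mu0 _.
set F := fun x l => I x + mu * (2 * ip (Phi x) l - ipnorm ip l ^+ 2).
set J := fun x => I x + mu * ipnorm ip (Phi x) ^+ 2.
have FJ : forall y, F y (Phi y) = J y.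
  by move=> y; rewrite /F /J ipnorm2 //; ring.
match goal with |- ?P \/ _ => case: (pselect P) => [h|h]; [by left|right] end.
move/existsNP: h => [N h].
have [fc hA] : filtering_cover N /\ forall A, N A ->
   (ereal_inf [set ereal_sup [set (F x l)%:E | l in Phi @` A] | x in A] <=
    ereal_sup [set ereal_inf [set (F x l)%:E | x in A] | l in [set: Y]])%E.
  split.
    by apply: contrapT => nfc; apply: h => fc; exfalso.
  move=> A NA; rewrite leNgt; apply/negP => lt; apply: h => _; by exists A.
case: fc => _ cov up.
move=> u umin x.
have : (\bigcup_(A in N) A) u by rewrite cov.
case=> A0 NA0 A0u.
have : (\bigcup_(A in N) A) x by rewrite cov.
case=> A1 NA1 A1x.
have [A NA sA] := up _ _ NA0 NA1.
have Au : A u by apply: sA; left.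
have Ax : A x by apply: sA; right.
have hJ : ((J u)%:E <= ereal_sup [set ereal_inf [set (F x l)%:E | x in A] | l in [set: Y]])%E.
  apply: le_trans (hA _ NA).
  apply: le_ereal_inf_tmp => z [y Ay <-].
  apply: le_trans (_ : (J y)%:E <= _)%E; first by rewrite lee_fin; exact: umin.
  apply: ereal_sup_ubound; exists (Phi y); first by exists y.
  by rewrite FJ.
set p := Phi x; set q := Phi u.
set V := ip (p - q) (p - q).
set T := I u - I x - 2 * mu * (ip p q - ip q q).
suff : T <= 0.
  by rewrite /T ipnorm2 //; lra.
apply: (@final _ mu V) => //; first exact: ipge0.
move=> s s0 _.
have : ((J u - s ^+ 2)%:E < (J u)%:E)%E.
  rewrite lte_fin; have : 0 < s ^+ 2 by rewrite exprn_gt0. lra.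
move/lt_le_trans/(_ hJ)/ereal_sup_gt => [_ [l _ <-] lt].
have h1 : (J u - s ^+ 2) < F u l.
  rewrite -lte_fin; apply: lt_le_trans lt _; apply: ereal_inf_lbound; by exists u.
have h2 : (J u - s ^+ 2) < F x l.
  rewrite -lte_fin; apply: lt_le_trans lt _; apply: ereal_inf_lbound; by exists x.
have [d ld] : exists d, l = q + d by exists (l - q); rewrite addrC subrK.
subst l.
set D := ip d d.
set E0 := ip (p - q) d.
apply: (@step _ mu V D E0 T s) => //.
- exact: ipge0.
- move: h1; rewrite /J /F !ipnorm2 // !ipDl // !ipDr // -/q (@ipS _ _ _ H d q).
  rewrite /D; lra.
- move: h2; rewrite /J /F /T /E0 !ipnorm2 // !ipDl // !ipDr // -/q -/p.
  rewrite !ipNl // (@ipS _ _ _ H d q) /D. lra.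
- have := @ipge0 _ _ _ H (s *: (p - q) - d).
  rewrite !ipBl // !ipZl // !ipBr // !ipZr // -/V -/E0 -/D.
  rewrite (@ipS _ _ _ H d (p - q)) -/E0 => hh.
  rewrite -subr_ge0; have -> : s ^+ 2 * V + D - 2 * s * E0 = s * (s * V - E0) - (s * E0 - D) by ring.
  done.
Qed.
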